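(* Let $p$ be a prime and $\ell\ge1$. Let $\mathbb H\subseteq GL_n$ be a $\mathbb Q$-algebraic subgroup and let $\rho:\mathbb G\to\mathbb H$ be an isomorphism of $\mathbb Q$-algebraic groups. Let $\Gamma\le\mathbb G(\mathbb Q)$ be the image of $BS(1,p^\ell)$ under the standard embedding, i.e. $\Gamma=\left\{\begin{pmatrix}p^{\ell k}&r\\0&1\end{pmatrix}:k\in\mathbb Z,\ r\in\mathbb Z[1/p]\right\}$. Then $\rho(\Gamma)$ has the congruence subgroup property: every finite-index subgroup $K$ of $\rho(\Gamma)$ contains $\rho(\Gamma)(M)$ for some integer $M>1$ coprime to $p$.
   Context: $\mathbb G=\mathbb G_a\rtimes\mathbb G_m$ is the affine group, viewed as the $\mathbb Q$-algebraic subgroup of $GL_2$ consisting of matrices $\begin{pmatrix}x&y\\0&1\end{pmatrix}$ with $x$ invertible. For a subgroup $\Lambda\le GL_n(\mathbb Q)$ and an integer $M>0$ coprime to $p$, $\Lambda(M)$ denotes the set of $g\in\Lambda\cap GL_n(\mathbb Z[1/p])$ with $g\equiv\mathbf 1_n\pmod{M\mathbb Z[1/p]}$ entrywise, i.e. the intersection of $\Lambda$ with the kernel of reduction $GL_n(\mathbb Z[1/p])\to GL_n(\mathbb Z/M\mathbb Z)$. *)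

(* Defs.v *)
From mathcomp Require Import all_boot all_order all_algebra.
From mathcomp Require Import mpoly.
Set Implicit Arguments. Unset Strict Implicit. Unset Printing Implicit Defensive.
Import Order.TTheory GRing.Theory Num.Theory.
Local Open Scope ring_scope.

(* The affine group G = G_a x| G_m: its Q-points are the matrices          *)
(*   [[x, y], [0, 1]]  with x : rat, x != 0, encoded by the pair (x, y).   *)
(* The coordinate ring of G is Q[x, x^-1, y]; a regular function on G is   *)
(* an element of {mpoly rat[3]} evaluated at (x, x^-1, y).                 *)
Definition Gcoords (x y : rat) : 'I_3 -> rat := fun i => [:: x; x^-1; y]`_i.

(* Coordinate ring of GL_n: Q[a_ij, det^-1]; a regular function on GL_n is *)
(* an element of {mpoly rat[n*n+1]} evaluated at (entries of A, det A^-1).  *)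
Definition GLcoords n (A : 'M[rat]_n) : 'I_(n * n + 1) -> rat :=
  fun i => (row_mx (mxvec A) ((\det A)^-1)%:M) 0 i.

Definition rho_at n (P : 'M[{mpoly rat[3]}]_n) (x y : rat) : 'M[rat]_n :=
  map_mx (meval (Gcoords x y)) P.

(* P defines an isomorphism of Q-algebraic groups rho : G -> H, where       *)
(* H := rho(G) subset GL_n:                                                 *)
(*  - rho has a regular inverse H -> G, i.e. there are regular functions on *)
(*    GL_n whose restrictions to H recover the coordinates x, x^-1, y of    *)
(*    rho^-1 (so H is a closed subgroup and rho : G -> H is an isomorphism). *)
Definition alg_group_iso n (P : 'M[{mpoly rat[3]}]_n) : Prop :=
  [/\ forall x y : rat, x != 0 -> rho_at P x y \in unitmx,
      rho_at P 1 0 = 1%:M,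
      forall x1 y1 x2 y2 : rat, x1 != 0 -> x2 != 0 ->
        rho_at P (x1 * x2) (x1 * y2 + y1) = rho_at P x1 y1 *m rho_at P x2 y2 &
      exists fx fxi fy : {mpoly rat[n * n + 1]},
        forall x y : rat, x != 0 ->
          [/\ meval (GLcoords (rho_at P x y)) fx = x,
              meval (GLcoords (rho_at P x y)) fxi = x^-1 &
              meval (GLcoords (rho_at P x y)) fy = y]].

Definition inZp (p : nat) (r : rat) : Prop :=
  exists (a : int) (m : nat), r = a%:~R / (p%:R ^+ m).

Definition inGamma (p l : nat) (x y : rat) : Prop :=
  (exists k : int, x = (p%:R : rat) ^ (l%:Z * k)) /\ inZp p y.

Definition in_rhoGamma n (P : 'M[{mpoly rat[3]}]_n) (p l : nat) (g : 'M[rat]_n) : Prop :=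
  exists x y : rat, inGamma p l x y /\ g = rho_at P x y.

Definition finite_index_subgroup n (S K : 'M[rat]_n -> Prop) : Prop :=
  [/\ forall g, K g -> S g,
      K 1%:M,
      forall g h, K g -> K h -> K (g *m h),
      forall g, K g -> K (invmx g) &
      exists s : seq 'M[rat]_n,
        forall g, S g -> exists2 t, t \in s & exists2 k, K k & g = t *m k].

Definition cong_kernel n (p M : nat) (g : 'M[rat]_n) : Prop :=
  [/\ g \in unitmx,
      forall i j, inZp p (g i j),
      forall i j, inZp p (invmx g i j) &
      forall i j, exists2 r, inZp p r & g i j - (i == j)%:R = M%:R * r].

(* Main.v *)
Require Import Defs.
From mathcomp Require Import all_boot all_order all_algebra.
From mathcomp Require Import mpoly.
From mathcomp Require Import ring zify.
From Stdlib Require Import Classical ClassicalEpsilon.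
Import Order.TTheory GRing.Theory Num.Theory.
Notation zp := Defs.inZp.
Local Open Scope ring_scope.

Lemma pR0 (p : nat) : (0 < p)%N -> (p%:R : rat) != 0.
Proof. by move=> hp; rewrite pnatr_eq0 -lt0n. Qed.

Lemma zp_int p (a : int) : zp p a%:~R.
Proof. by exists a, 0%N; rewrite expr0 divr1. Qed.

Lemma zp_nat p (a : nat) : zp p a%:R.
Proof. by exists a, 0%N; rewrite expr0 divr1. Qed.

Lemma zpD p a b : (0 < p)%N -> zp p a -> zp p b -> zp p (a + b).
Proof.
move=> hp [x [m ->]] [y [k ->]].
exists (x * (p ^ k)%:Z + y * (p ^ m)%:Z), (m + k)%N.
have h := @pR0 p hp.
rewrite exprD rmorphD /= !rmorphM /= -!natrX !pmulrn.
field; by rewrite ?natrX ?mulf_neq0 ?expf_neq0.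
Qed.

Lemma zpM p a b : (0 < p)%N -> zp p a -> zp p b -> zp p (a * b).
Proof.
move=> hp [x [m ->]] [y [k ->]].
exists (x * y), (m + k)%N.
have h := @pR0 p hp.
rewrite exprD !rmorphM /=.
field; by rewrite ?mulf_neq0 ?expf_neq0.
Qed.

Lemma zpN p a : zp p a -> zp p (- a).
Proof. by move=> [x [m ->]]; exists (- x), m; rewrite rmorphN /= mulNr. Qed.

Lemma zpdiv p a k : (0 < p)%N -> zp p a -> zp p (a / p%:R ^+ k).
Proof.
move=> hp [x [m ->]]; exists x, (m + k)%N.
have h := @pR0 p hp.
rewrite exprD; field; by rewrite ?mulf_neq0 ?expf_neq0.
Qed.

Lemma zp_pexpz p (z : int) : (0 < p)%N -> zp p ((p%:R : rat) ^ z).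
Proof.
move=> hp; case: z => m.
  by rewrite -exprnP -natrX; apply: zp_nat.
rewrite NegzE -exprnN; exists 1, m.+1; by rewrite mul1r.
Qed.

Definition Ecg (p M : nat) (a b : rat) :=
  [/\ zp p a, zp p b & exists2 r, zp p r & a - b = M%:R * r].

Lemma E_refl p M a : zp p a -> Ecg p M a a.
Proof. by move=> h; split=> //; exists 0; [exact: (zp_nat p 0)|rewrite subrr mulr0]. Qed.

Lemma E_add p M a b c d : (0 < p)%N -> Ecg p M a b -> Ecg p M c d -> Ecg p M (a + c) (b + d).
Proof.
move=> hp [ha hb [r hr e1]] [hc hd [s hs e2]]; split; try exact: zpD.
exists (r + s); first exact: zpD.
by rewrite mulrDr -e1 -e2; ring.
Qed.

Lemma E_opp p M a b : Ecg p M a b -> Ecg p M (- a) (- b).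
Proof.
move=> [ha hb [r hr e1]]; split; try exact: zpN.
by exists (- r); [exact: zpN | rewrite mulrN -e1; ring].
Qed.

Lemma E_mul p M a b c d : (0 < p)%N -> Ecg p M a b -> Ecg p M c d -> Ecg p M (a * c) (b * d).
Proof.
move=> hp [ha hb [r hr e1]] [hc hd [s hs e2]]; split; try exact: zpM.
exists (a * s + r * d); first by apply: zpD => //; apply: zpM.
have -> : a * c - b * d = a * (c - d) + (a - b) * d by ring.
by rewrite e1 e2; ring.
Qed.

Lemma E_exp p M a b k : (0 < p)%N -> Ecg p M a b -> Ecg p M (a ^+ k) (b ^+ k).
Proof.
move=> hp h; elim: k => [|k IH]; first by rewrite !expr0; apply: E_refl; apply: (zp_nat p 1).
by rewrite !exprS; apply: E_mul.
Qed.

Lemma E_sum p M (I : Type) (r : seq I) (P : pred I) (F G : I -> rat) :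
  (0 < p)%N -> (forall i, P i -> Ecg p M (F i) (G i)) ->
  Ecg p M (\sum_(i <- r | P i) F i) (\sum_(i <- r | P i) G i).
Proof.
move=> hp h; apply: (big_ind2 (Ecg p M)) => //.
  by apply: E_refl; apply: (zp_nat p 0).
by move=> *; apply: E_add.
Qed.

Lemma E_prod p M (I : Type) (r : seq I) (P : pred I) (F G : I -> rat) :
  (0 < p)%N -> (forall i, P i -> Ecg p M (F i) (G i)) ->
  Ecg p M (\prod_(i <- r | P i) F i) (\prod_(i <- r | P i) G i).
Proof.
move=> hp h; apply: (big_ind2 (Ecg p M)) => //.
  by apply: E_refl; apply: (zp_nat p 1).
by move=> *; apply: E_mul.
Qed.

Lemma E_det p M n (A B : 'M[rat]_n) : (0 < p)%N ->
  (forall i j, Ecg p M (A i j) (B i j)) -> Ecg p M (\det A) (\det B).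
Proof.
move=> hp h; rewrite /determinant; apply: E_sum => // s _.
apply: E_mul => //; last by apply: E_prod.
apply: E_refl; case: (perm.odd_perm s); rewrite ?expr1 ?expr0.
  by apply: zpN; apply: (zp_nat p 1).
exact: (zp_nat p 1).
Qed.

Lemma E_poly p k (f : {mpoly rat[k]}) : (0 < p)%N -> exists N : nat, (0 < N)%N /\
  forall M (c c0 : 'I_k -> rat), (forall i, Ecg p M (c i) (c0 i)) ->
    Ecg p M (N%:R * f.@[c]) (N%:R * f.@[c0]).
Proof.
move=> hp; elim/mpolyind: f.
  exists 1%N; split => // M c c0 _; rewrite !meval0 mulr0; apply: E_refl; exact: (zp_nat p 0).
move=> a m f _ _ [N [hN IH]].
exists (`|denq a| * N)%N; split; first by rewrite muln_gt0 hN absz_gt0 denq_neq0.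
move=> M c c0 hc.
have hd : (`|denq a|%:R : rat) = (denq a)%:~R by rewrite -[_%:R]/((`|denq a|%:Z)%:~R) abszE gtr0_norm // denq_gt0.
have eq v : ((`|denq a| * N)%:R * (a *: 'X_[m] + f).@[v] : rat)
   = (N%:R * (numq a)%:~R) * (\prod_i v i ^+ m i) + `|denq a|%:R * (N%:R * f.@[v]).
  by rewrite mevalD mevalZ mevalX natrM hd numqE; ring.
rewrite !eq; apply: E_add => //; apply: E_mul => //.
- by apply: E_refl; apply: zpM => //; [apply: zp_nat | apply: zp_int].
- by apply: E_prod => // i _; apply: E_exp.
- by apply: E_refl; apply: zp_nat.
exact: IH.
Qed.

Lemma E_GL p M n (g : 'M[rat]_n) : (0 < p)%N -> cong_kernel p M g ->
  forall i, Ecg p M (GLcoords g i) (GLcoords 1%:M i).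
Proof.
move=> hp [gu gz giz gc].
have Eg i j : Ecg p M (g i j) (1%:M i j).
  split => //; first by rewrite mxE; apply: zp_nat.
  by rewrite mxE; apply: gc.
have hdet : Ecg p M (\det g) 1 by rewrite -(det1 _ n); apply: E_det.
have gd : \det g != 0 by rewrite -unitfE -unitmxE.
have hu : Ecg p M ((\det g)^-1) 1.
  have zu : zp p ((\det g)^-1).
    by rewrite -det_inv; have [] := @E_det p M n (invmx g) (invmx g) hp (fun i j => @E_refl p M _ (giz i j)).
  case: hdet => _ _ [r hr er]; split => //; first exact: (zp_nat p 1).
  exists (- ((\det g)^-1 * r)); first by apply: zpN; apply: zpM.
  have -> : (\det g)^-1 - 1 = - ((\det g)^-1 * (\det g - 1)) by field.
  by rewrite er; ring.
move=> i; rewrite -(splitK i); case: (split i) => [j|j] /=; rewrite /GLcoords.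
  by rewrite !row_mxEl; case: (mxvec_indexP j) => a b; rewrite !mxvecE.
by rewrite !row_mxEr ord1 !mxE det1 invr1 eqxx !mulr1n.
Qed.

Lemma E_inv p M a : (0 < p)%N -> Ecg p M a 1 -> zp p a^-1 -> a != 0 -> Ecg p M a^-1 1.
Proof.
move=> hp [_ _ [r hr er]] za an; split => //; first exact: (zp_nat p 1).
exists (- (a^-1 * r)); first by apply: zpN; apply: zpM.
have -> : a^-1 - 1 = - (a^-1 * (a - 1)) by field.
by rewrite er; ring.
Qed.

Lemma cong_cancel p (N Np a Q : nat) (z : rat) : N = (Np * p ^ a)%N -> (0 < Np)%N -> (0 < p)%N ->
  (exists2 r, zp p r & N%:R * z = (Np * Q)%:R * r) -> exists2 r', zp p r' & z = Q%:R * r'.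
Proof.
move=> -> hNp hp [r hr er]; exists (r / p%:R ^+ a); first exact: zpdiv.
have h1 := @pR0 p hp.
have h2 : (Np%:R : rat) != 0 by rewrite pnatr_eq0 -lt0n.
move: er; rewrite !natrM natrX => er.
apply: (mulfI h2); apply: (mulfI (expf_neq0 a h1)).
rewrite mulrA [_ * Np%:R]mulrC er; field.
by rewrite expf_neq0.
Qed.

Lemma ord_lemma p l L (k : int) : prime p -> (0 < l)%N -> (0 < L)%N ->
  Ecg p (p ^ (l * L)).-1 ((p%:R : rat) ^ (l%:Z * k)) 1 -> (L%:Z %| k)%Z.
Proof.
move=> pr hl hL Ek.
have hp : (0 < p)%N := prime_gt0 pr.
have p1 : (1 < p)%N := prime_gt1 pr.
have h1 := @pR0 p hp.
have natZ (x : nat) : ((x%:Z)%:~R : rat) = x%:R by [].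
set Q := (p ^ (l * L)).-1.
have hQ : Q.+1 = (p ^ (l * L))%N by rewrite prednK // expn_gt0 hp.
have cQ : coprime Q p.
  by rewrite -(@coprime_pexpr (l * L)) ?muln_gt0 ?hl ?hL // -hQ coprimenS.
set u : rat := p%:R ^+ (l * L).
have un : u != 0 by rewrite expf_neq0.
have Eu : Ecg p Q u 1.
  split; [by rewrite /u -natrX; apply: zp_nat | exact: (zp_nat p 1) |].
  exists 1; first exact: (zp_nat p 1).
  by rewrite mulr1 /u -natrX -hQ -addn1 natrD addrK.
have Euj j : Ecg p Q (u ^ j) 1.
  case: j => m.
    by rewrite -exprnP -(expr1n _ m); apply: E_exp.
  rewrite NegzE -exprnN; apply: E_inv => //.
  - by rewrite -(expr1n _ m.+1); apply: E_exp.
  - by rewrite /u -exprM exprnN; apply: zp_pexpz.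
  - by rewrite expf_neq0.
have hLz : (0 < L%:Z) by rewrite ltz_nat.
set q := (k %/ L)%Z; set s := (k %% L)%Z.
have s0 : 0 <= s := modz_ge0 k (lt0r_neq0 hLz).
have sL : s < L%:Z := ltz_pmod k hLz.
pose s' := `|s|%N.
have es : s = s'%:Z by rewrite /s' gez0_abs.
have ek : l%:Z * k = (l * L)%:Z * q + (l * s')%:Z.
  by rewrite {1}(divz_eq k L) -/q -/s es !PoszM; ring.
set t := (p ^ (l * s'))%N.
have Es : Ecg p Q t%:R 1.
  have -> : (t%:R : rat) = u ^ (- q) * p%:R ^ (l%:Z * k).
    rewrite ek expfzDr // -exprz_exp -!exprnP -/u -invr_expz natrX.
    by rewrite mulKf // expfz_neq0.
  by rewrite -(mulr1 1); apply: E_mul.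
case: Es => _ _ [r [a [m er]] e].
have tpos : (0 < t)%N by rewrite expn_gt0 hp.
have et : (t%:R : rat) = (t.-1)%:R + 1 by rewrite natr1 prednK.
rewrite et addrK er in e.
have e2 : ((t.-1 * p ^ m)%:R : rat) = (Q%:Z * a)%:~R.
  by rewrite natrM intrM natZ natrX e; field; rewrite expf_neq0.
have e3 : (t.-1 * p ^ m)%:Z = Q%:Z * a by apply: (@intr_inj rat).
have e4 : (t.-1 * p ^ m)%N = (Q * `|a|)%N by have := congr1 absz e3; rewrite abszM.
have hdiv : (Q %| t.-1 * p ^ m)%N by rewrite e4 dvdn_mulr.
rewrite Gauss_dvdl in hdiv; last exact: coprimeXr.
have sL' : (s' < L)%N by rewrite -ltz_nat -es.
have tQ : (t < p ^ (l * L))%N by rewrite ltn_exp2l // ltn_pmul2l.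
have t1 : t.-1 = 0%N.
  case: (posnP t.-1) => // ht; have := dvdn_leq ht hdiv; lia.
have s'0 : s' = 0%N.
  case: (posnP (l * s')) => [|hls].
    by move/eqP; rewrite muln_eq0 (negbTE (lt0n_neq0 hl)) => /eqP.
  have := ltn_exp2l 0 (l * s') p1; rewrite hls expn0 -/t; lia.
by rewrite (divz_eq k L) -/q -/s es s'0 addr0; apply: dvdz_mull; apply: dvdzz.
Qed.

Lemma php (T : eqType) (s : seq T) (R : nat -> T -> Prop) :
  (forall i, (i <= size s)%N -> exists2 t, t \in s & R i t) ->
  exists i j t, [/\ (i < j <= size s)%N, R i t & R j t].
Proof.
move=> h; have [x0 _ _] := h 0%N (leq0n _).
have f_ex (i : 'I_(size s).+1) : exists k : 'I_(size s), R i (nth x0 s k).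
  have [t ts Rt] := h i (ltnSE (ltn_ord i)).
  have it : (index t s < size s)%N by rewrite index_mem.
  by exists (Ordinal it) => /=; rewrite nth_index.
pose f i := proj1_sig (constructive_indefinite_description _ (f_ex i)).
have Rf (i : 'I_(size s).+1) : R i (nth x0 s (f i)) := proj2_sig (constructive_indefinite_description _ (f_ex i)).
apply: NNPP => hn.
have inj : injective f.
  move=> i j eij; apply/eqP; rewrite eq_sym; apply/negP => /negP neq.
  case: (ltngtP i j) => [lt|lt|/val_inj eq]; last by rewrite eq eqxx in neq.
  - apply: hn; exists i, j, (nth x0 s (f i)); split => //; last by rewrite eij.
    by rewrite lt -ltnS ltn_ord.
  - apply: hn; exists j, i, (nth x0 s (f j)); split => //; last by rewrite -eij.
    by rewrite lt -ltnS ltn_ord.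
by have := leq_card f inj; rewrite !card_ord ltnn.
Qed.

Lemma Kpow n (S K : 'M[rat]_n -> Prop) (s : seq 'M[rat]_n) (h : nat -> 'M[rat]_n) :
  (forall g, K g -> S g) -> K 1%:M -> (forall g k, K g -> K k -> K (g *m k)) ->
  (forall g, K g -> K (invmx g)) ->
  (forall g, S g -> exists2 t, t \in s & exists2 k, K k & g = t *m k) ->
  (forall g, S g -> g \in unitmx) ->
  h 0%N = 1%:M -> (forall i j, h (i + j)%N = h i *m h j) -> (forall i, S (h i)) ->
  K (h (size s)`!).
Proof.
move=> KS K1 KM KV Hs SU h0 hD hS.
have [i [j [t [/andP [ij jN] [k Kk ek] [k' Kk' ek']]]]] :=
  @php _ s (fun i t => exists2 k, K k & h i = t *m k) (fun i _ => Hs _ (hS i)).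
have ej : h j = h i *m h (j - i)%N by rewrite -hD subnKC // ltnW.
have tu : t \in unitmx /\ k \in unitmx.
  by have := SU _ (hS i); rewrite ek unitmx_mul => /andP.
case: tu => tu ku.
have e1 : k' = k *m h (j - i)%N.
  by rewrite -(mulKmx tu k') -ek' ej ek -mulmxA mulKmx.
have Km : K (h (j - i)%N) by rewrite -(mulKmx ku (h _)) -e1; apply: KM => //; apply: KV.
have Kq q : K (h ((j - i) * q)%N).
  elim: q => [|q IH]; first by rewrite muln0 h0.
  by rewrite mulnS addnC hD; apply: KM.
have hm : (0 < j - i <= size s)%N by rewrite subn_gt0 ij /= (leq_trans (leq_subr _ _) jN).
by rewrite -(divnK (dvdn_fact hm)) mulnC; apply: Kq.
Qed.

Theorem proposition1p6 (p l n : nat) (P : 'M[{mpoly rat[3]}]_n) :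
  prime p -> (1 <= l)%N -> alg_group_iso P ->
  forall K : 'M[rat]_n -> Prop,
    finite_index_subgroup (in_rhoGamma P p l) K ->
    exists M : nat, [/\ (1 < M)%N, coprime M p &
      forall g, in_rhoGamma P p l g -> cong_kernel p M g -> K g].
Proof.
move=> pr hl [Hunit H1 Hhom [fx [fxi [fy Hf]]]] K [KS K1 KM KV [s Hs]].
have hp : (0 < p)%N := prime_gt0 pr.
have p1 : (1 < p)%N := prime_gt1 pr.
have pn := @pR0 p hp.
have SU g : in_rhoGamma P p l g -> g \in unitmx.
  by case=> x [y [[[k ->] _] ->]]; apply: Hunit; apply: expfz_neq0.
have [Nx [hNx Ex]] := E_poly p _ fx hp.
have [Ny [hNy Ey]] := E_poly p _ fy hp.
have hN : (0 < Nx * Ny)%N by rewrite muln_gt0 hNx hNy.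
have [Np cNp eN] := pfactor_coprime pr hN.
set D := (size s)`!.
have [Dp cDp eD] := pfactor_coprime pr (fact_gt0 (size s)).
have hD : (0 < D)%N := fact_gt0 _.
set L := (D * 2)%N.
have hL : (0 < L)%N by rewrite muln_gt0 hD.
set Q := (p ^ (l * L)).-1.
have hQ : Q.+1 = (p ^ (l * L))%N by rewrite prednK // expn_gt0 hp.
have cQ : coprime Q p.
  have lL : (0 < l * L)%N by rewrite muln_gt0 hl hL.
  by rewrite -(coprime_pexpr _ _ lL) -hQ coprimenS.
have Np0 : (0 < Np)%N by move: hN; rewrite eN muln_gt0 => /andP [].
have Dp0 : (0 < Dp)%N by move: hD; rewrite /D eD muln_gt0 => /andP [].
have Q2 : (1 < Q)%N.
  have lL2 : (1 < l * L)%N by rewrite /L; nia.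
  have : (p ^ 1 < p ^ (l * L))%N by rewrite ltn_exp2l.
  rewrite expn1 -hQ; lia.
exists (Np * (Q * Dp))%N; split.
- by rewrite (leq_trans Q2) // -{1}(mul1n Q) (leq_mul Np0) // leq_pmulr.
- by rewrite !coprimeMl cQ coprime_sym cNp coprime_sym cDp.
move=> g [x [y [[[k ex] zy] eg]]] ck.
have xn : x != 0 by rewrite ex expfz_neq0.
have Ec := @E_GL p _ n g hp ck.
have [fxg _ fyg] := Hf x y xn.
have [fx1 _ fy1] := Hf 1 0 (oner_neq0 _).
rewrite H1 in fx1 fy1; rewrite -eg in fxg fyg.
have Ecx := Ex _ _ _ Ec; have Ecy := Ey _ _ _ Ec.
rewrite fxg fx1 in Ecx; rewrite fyg fy1 in Ecy.
have Ecx' : Ecg p (Np * (Q * Dp)) ((Nx * Ny)%N%:R * x) ((Nx * Ny)%N%:R * 1).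
  rewrite natrM mulrAC [X in Ecg _ _ _ X]mulrAC.
  by apply: E_mul => //; apply: E_refl; apply: zp_nat.
have Ecy' : Ecg p (Np * (Q * Dp)) ((Nx * Ny)%N%:R * y) ((Nx * Ny)%N%:R * 0).
  rewrite natrM -!mulrA.
  by apply: E_mul => //; apply: E_refl; apply: zp_nat.
have [rx zrx erx] : exists2 r', zp p r' & x - 1 = (Q * Dp)%:R * r'.
  apply: (@cong_cancel p _ Np _ _ _ eN) => //.
  by case: Ecx' => _ _ [r zr er]; exists r => //; rewrite mulrBr.
have [ry zry ery] : exists2 r', zp p r' & y = (Q * Dp)%:R * r'.
  apply: (@cong_cancel p _ Np _ _ _ eN) => //.
  by case: Ecy' => _ _ [r zr er]; exists r => //; rewrite -er mulr0 subr0.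
have ExQ : Ecg p Q ((p%:R : rat) ^ (l%:Z * k)) 1.
  rewrite -ex; split; [by rewrite ex; apply: zp_pexpz | exact: (zp_nat p 1) |].
  exists (Dp%:R * rx); first by apply: zpM => //; apply: zp_nat.
  by rewrite erx natrM mulrA.
have /dvdzP [q eq] := @ord_lemma p l L k pr hl hL ExQ.
set u : rat := p%:R ^+ (l * D).
have un : u != 0 by rewrite expf_neq0.
have exu : x = u ^ (q * 2).
  by rewrite ex eq /u exprnP exprz_exp /L PoszM; congr (_ ^ _); rewrite !PoszM; ring.
have inS1 w i : zp p w -> in_rhoGamma P p l (rho_at P 1 (i%:R * w)).
  move=> zw; exists 1, (i%:R * w); split => //; split; last by apply: zpM => //; apply: zp_nat.
  by exists 0; rewrite mulr0 expr0z.
have inSx i : in_rhoGamma P p l (rho_at P (p%:R ^+ (l * i)) 0).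
  exists (p%:R ^+ (l * i)), 0; split => //; split; last exact: (zp_nat p 0).
  by exists i%:Z; rewrite -PoszM exprnP.
have Ku : K (rho_at P u 0).
  have := @Kpow n (in_rhoGamma P p l) K s (fun i => rho_at P (p%:R ^+ (l * i)) 0) KS K1 KM KV Hs SU.
  apply => //.
  - by rewrite muln0 expr0 H1.
  - by move=> i j /=; rewrite -Hhom ?expf_neq0 // mulr0 addr0 -exprD mulnDr.
have Kuz (c : int) : K (rho_at P (u ^ c) 0).
  have Kpos m : K (rho_at P (u ^ m.+1) 0) /\ K (rho_at P (u ^ m) 0).
    elim: m => [|m [IH _]]; first by rewrite expr1z expr0z H1.
    split => //; rewrite exprSzr.
    have := Hhom (u ^ m.+1) 0 u 0 (expfz_neq0 _ un) un.
    rewrite mulr0 addr0 => ->; exact: KM.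
  case: c => m; first by case: (Kpos m).
  rewrite NegzE -invr_expz.
  have [Km _] := Kpos m.
  have ev : rho_at P (u ^ m.+1) 0 *m rho_at P (u ^ m.+1)^-1 0 = 1%:M.
    by rewrite -Hhom ?invr_eq0 ?expfz_neq0 // mulr0 addr0 mulfV ?expfz_neq0 // H1.
  have vu : rho_at P (u ^ m.+1) 0 \in unitmx by apply: Hunit; rewrite expfz_neq0.
  have -> : rho_at P (u ^ m.+1)^-1 0 = invmx (rho_at P (u ^ m.+1) 0).
    by rewrite -[LHS](mulKmx vu) ev mulmx1.
  exact: KV.
have [w zw ew] : exists2 w, zp p w & y = D%:R * w.
  exists ((Q%:R * ry) / p%:R ^+ logn p D).
    by apply: zpdiv => //; apply: zpM => //; apply: zp_nat.
  have eD2 : (D%:R : rat) = Dp%:R * p%:R ^+ logn p D by rewrite /D {1}eD natrM natrX.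
  rewrite ery eD2 natrM; field; by rewrite expf_neq0.
have Ky : K (rho_at P 1 y).
  rewrite ew.
  have := @Kpow n (in_rhoGamma P p l) K s (fun i => rho_at P 1 (i%:R * w)) KS K1 KM KV Hs SU.
  apply => //.
  - by rewrite mul0r H1.
  - by move=> i j /=; rewrite -Hhom ?oner_neq0 // mul1r natrD; congr rho_at; ring.
  - by move=> i; apply: inS1.
have := Hhom 1 y x 0 (oner_neq0 _) xn; rewrite mulr0 add0r mul1r eg => ->.
by apply: KM => //; rewrite exu.
Qed.
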